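(* Let $N(x)=\frac{1}{\sqrt{2\pi}}\int_{-\infty}^x e^{-t^2/2}\,dt$ be the standard normal cumulative distribution function. For $\alpha>0$ define \[ \chi_\alpha(x) := N\Big(\tfrac{\alpha}{2}\big(x-\tfrac{1}{x}\big)\Big) - e^{\alpha^2/2}\, N\Big(-\tfrac{\alpha}{2}\big(x+\tfrac{1}{x}\big)\Big), \qquad x>0. \] Fix $S>0$, $X>0$, $T>0$ with $X\neq S$, and for $\sigma>0$ let \[ \mathscr{C}(\sigma) := S\,N(d_1) - X\,N(d_2),\qquad d_1=\frac{\log(S/X)}{\sigma\sqrt{T}}+\frac{\sigma\sqrt{T}}{2},\quad d_2=\frac{\log(S/X)}{\sigma\sqrt{T}}-\frac{\sigma\sqrt{T}}{2}. \] Put $\alpha:=\sqrt{2\,|\log(S/X)|}$. Then for all $\sigma>0$, \[ \mathscr{C}(\sigma)=\begin{cases} S\,\chi_\alpha\!\left(\frac{\sigma\sqrt{T}}{\alpha}\right) & \text{if } X>S,\\[2mm] S-X+X\,\chi_\alpha\!\left(\frac{\sigma\sqrt{T}}{\alpha}\right) & \text{if } X<S.\end{cases} \]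
   Context: $\mathscr{C}(\sigma)$ is the Black–Scholes price of a European call as a function of the volatility $\sigma$, where $S$ is the value of the underlying, $X$ the present value of the strike, and $T$ the time to maturity. *)

(* Defs.v *)
From Stdlib Require Import Reals.
From Coquelicot Require Import Coquelicot.
Open Scope R_scope.

Definition Ncdf (x : R) : R :=
  / sqrt (2 * PI) *
  RInt_gen (fun t => exp (- t ^ 2 / 2)) (Rbar_locally m_infty) (at_point x).

Definition chi (alpha x : R) : R :=
  Ncdf (alpha / 2 * (x - / x)) - exp (alpha ^ 2 / 2) * Ncdf (- (alpha / 2) * (x + / x)).

Definition bs_d1 (S X T sigma : R) : R :=
  ln (S / X) / (sigma * sqrt T) + sigma * sqrt T / 2.
Definition bs_d2 (S X T sigma : R) : R :=
  ln (S / X) / (sigma * sqrt T) - sigma * sqrt T / 2.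
Definition bs_call (S X T sigma : R) : R :=
  S * Ncdf (bs_d1 S X T sigma) - X * Ncdf (bs_d2 S X T sigma).

(* Main.v *)
Require Import Defs.
From Stdlib Require Import Reals Lra.
From Coquelicot Require Import Coquelicot.
Open Scope R_scope.

Definition g (t : R) := exp (- t ^ 2).

Lemma g_cont x : continuous g x.
Proof. apply (ex_derive_continuous (V:=R_NormedModule)); unfold g; auto_derive; auto. Qed.

Lemma g_ex a b : ex_RInt g a b.
Proof. apply (ex_RInt_continuous (V:=R_CompleteNormedModule)); intros; apply g_cont. Qed.

Definition I x := RInt g 0 x.

Lemma I_der x : is_derive I x (g x).
Proof.
  apply is_derive_RInt with (a := 0).
  - apply filter_forall; intros; apply RInt_correct, g_ex.
  - apply g_cont.
Qed.

Definition F x t := exp (- (x ^ 2 * (1 + t ^ 2))) / (1 + t ^ 2).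
Definition dF x t := -2 * x * exp (- (x ^ 2 * (1 + t ^ 2))).

Lemma pos1 t : 0 < 1 + t ^ 2.
Proof. nra. Qed.

Lemma F_der x t : is_derive (fun u => F u t) x (dF x t).
Proof.
  unfold F, dF. auto_derive; auto.
  simpl. field. generalize (pos1 t); simpl; lra.
Qed.

Lemma F_cont x t : continuous (F x) t.
Proof. apply (ex_derive_continuous (V:=R_NormedModule)); unfold F; auto_derive. generalize (pos1 t); lra. Qed.

Lemma dF_cont2 x t : continuity_2d_pt dF x t.
Proof.
  unfold dF.
  apply continuity_2d_pt_mult.
  - apply continuity_2d_pt_mult. apply continuity_2d_pt_const. apply continuity_2d_pt_id1.
  - apply continuity_1d_2d_pt_comp.
    + apply derivable_continuous_pt, derivable_pt_exp.
    + apply continuity_2d_pt_opp. apply continuity_2d_pt_mult.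
      * apply (continuity_2d_pt_ext (fun u v => u * u)). intros; simpl; ring.
        apply continuity_2d_pt_mult; apply continuity_2d_pt_id1.
      * apply continuity_2d_pt_plus. apply continuity_2d_pt_const.
        apply (continuity_2d_pt_ext (fun u v => v * v)). intros; simpl; ring.
        apply continuity_2d_pt_mult; apply continuity_2d_pt_id2.
Qed.

Definition A x := RInt (F x) 0 1.

Lemma A_der x : is_derive A x (RInt (dF x) 0 1).
Proof.
  assert (H : RInt (dF x) 0 1 = RInt (fun t => Derive (fun u => F u t) x) 0 1).
  { apply RInt_ext; intros. symmetry. apply is_derive_unique, F_der. }
  rewrite H. unfold A.
  apply (is_derive_RInt_param F 0 1 x).
  - apply filter_forall; intros. eexists; apply F_der.
  - intros. apply (continuity_2d_pt_ext dF).
    intros. symmetry. apply is_derive_unique, F_der. apply dF_cont2.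
  - apply filter_forall; intros. apply (ex_RInt_continuous (V:=R_CompleteNormedModule)); intros; apply F_cont.
Qed.

Lemma key x : RInt (dF x) 0 1 = -2 * exp (- x ^ 2) * I x.
Proof.
  transitivity (RInt (fun t => scal (-2 * exp (- x ^ 2)) (scal x (g (x * t + 0)))) 0 1).
  { apply RInt_ext; intros t _. unfold dF, g, scal; simpl; unfold mult; simpl.
    replace (- (x * (x * 1) * (1 + t * (t * 1)))) with (- (x*(x*1)) + - ((x * t + 0) * ((x * t + 0) * 1))) by ring.
    rewrite exp_plus. ring. }
  rewrite (RInt_scal (V:=R_CompleteNormedModule) (fun t => scal x (g (x * t + 0)))).
  2:{ apply (ex_RInt_continuous (V:=R_CompleteNormedModule)); intros.
      apply (ex_derive_continuous (V:=R_NormedModule)); unfold g; auto_derive; auto. apply ex_derive_scal, ex_derive_id. }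
  rewrite (RInt_comp_lin (V:=R_CompleteNormedModule)) by apply g_ex.
  unfold I, scal; simpl; unfold mult; simpl. f_equal. f_equal; ring.
Qed.

Definition h x := I x ^ 2 + A x.

Lemma h_der x : is_derive h x 0.
Proof.
  unfold h.
  evar (d : R).
  replace 0 with d.
  - apply (is_derive_plus (fun x => I x ^ 2) A).
    + apply (is_derive_pow I 2 x), I_der.
    + apply A_der.
  - unfold d. rewrite key. unfold g, plus; simpl. ring.
Qed.

Lemma h_const x : h x = h 0.
Proof.
  assert (H := is_RInt_derive h (fun _ => 0) 0 x (fun y _ => h_der y) (fun y _ => continuous_const (U:=R_UniformSpace) (V:=R_UniformSpace) 0 y)).
  apply is_RInt_unique in H. rewrite RInt_const in H.
  unfold minus, plus, opp, scal in H; simpl in H; unfold mult in H; simpl in H. lra.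
Qed.

Lemma h0 : h 0 = PI / 4.
Proof.
  unfold h, I, A. rewrite RInt_point. unfold zero; simpl.
  assert (C : forall x, Rmin 0 1 <= x <= Rmax 0 1 -> continuous (fun t => / (1 + t²)) x).
  { intros. apply (ex_derive_continuous (V:=R_NormedModule)); auto_derive. unfold Rsqr; nra. }
  assert (H := is_RInt_derive atan (fun t => / (1 + t²)) 0 1 (fun y _ => is_derive_atan y) C).
  apply is_RInt_unique in H.
  assert (E : RInt (F 0) 0 1 = atan 1 - atan 0).
  { transitivity (RInt (fun t => / (1 + t²)) 0 1); [| rewrite H; reflexivity]. apply RInt_ext; intros. unfold F, Rsqr; simpl. rewrite Rmult_0_l, Rmult_0_l, Ropp_0, exp_0. field.
      generalize (pos1 x); simpl; lra. }
  rewrite E, atan_1, atan_0. ring.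
Qed.

Lemma F_ex x : ex_RInt (F x) 0 1.
Proof. apply (ex_RInt_continuous (V:=R_CompleteNormedModule)); intros; apply F_cont. Qed.

Lemma exp_mono a b : a <= b -> exp a <= exp b.
Proof. intros [H|H]. apply Rlt_le, exp_increasing, H. subst; lra. Qed.

Lemma A_bound x : 0 <= A x <= exp (- x ^ 2).
Proof.
  assert (Hc : forall c : R, RInt (fun _ => c) 0 1 = c).
  { intros. rewrite RInt_const. unfold scal; simpl; unfold mult; simpl. ring. }
  split.
  - rewrite <- (Hc 0). apply RInt_le; try lra. apply ex_RInt_const. apply F_ex.
    intros t _. unfold F. apply Rlt_le, Rdiv_lt_0_compat. apply exp_pos. apply pos1.
  - rewrite <- (Hc (exp (- x ^ 2))). apply RInt_le; try lra. apply F_ex. apply ex_RInt_const.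
    intros t Ht. unfold F.
    assert (E1 : exp (- (x ^ 2 * (1 + t ^ 2))) <= exp (- x ^ 2)).
    { apply exp_mono. assert (0 <= x^2*t^2) by (apply Rmult_le_pos; apply pow2_ge_0). nra. }
    assert (P := pos1 t). assert (Q := exp_pos (- (x ^ 2 * (1 + t ^ 2)))).
    apply Rle_trans with (2 := E1).
    unfold Rdiv. rewrite <- (Rmult_1_r (exp (- (x ^ 2 * (1 + t ^ 2))))) at 2.
    apply Rmult_le_compat_l. lra.
    rewrite <- Rinv_1. apply Rinv_le_contravar; generalize (pow2_ge_0 t); lra.
Qed.

Lemma I_sq x : I x ^ 2 = PI / 4 - A x.
Proof. rewrite <- h0, <- (h_const x). unfold h. ring. Qed.

Lemma I_odd z : I (- z) = - I z.
Proof.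
  unfold I.
  assert (H := RInt_comp_lin (V:=R_CompleteNormedModule) g (-1) 0 0 z (g_ex _ _)).
  replace (-1 * 0 + 0) with 0 in H by ring. replace (-1 * z + 0) with (- z) in H by ring.
  rewrite <- H.
  rewrite (RInt_ext _ (fun y => scal (-1) (g y))).
  2:{ intros; unfold g; f_equal; f_equal; simpl; ring. }
  rewrite (RInt_scal (V:=R_CompleteNormedModule)) by apply g_ex.
  unfold scal; simpl; unfold mult; simpl; ring.
Qed.

Lemma I_nonneg z : 0 <= z -> 0 <= I z.
Proof.
  intros Hz. unfold I.
  assert (Hc : RInt (fun _ => 0) 0 z = 0).
  { rewrite RInt_const. unfold scal; simpl; unfold mult; simpl. ring. }
  apply Rle_trans with (RInt (fun _ => 0) 0 z); [lra|]. apply RInt_le; auto. apply ex_RInt_const. apply g_ex.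
  intros; unfold g. apply Rlt_le, exp_pos.
Qed.

Definition c := sqrt PI / 2.
Lemma c_pos : 0 < c.
Proof. unfold c. assert (0 < sqrt PI) by (apply sqrt_lt_R0, PI_RGT_0). lra. Qed.
Lemma c_sq : c ^ 2 = PI / 4.
Proof. unfold c. simpl. rewrite Rmult_1_r.
  replace (sqrt PI / 2 * (sqrt PI / 2)) with (sqrt PI * sqrt PI / 4) by field.
  rewrite sqrt_sqrt. reflexivity. generalize PI_RGT_0; lra. Qed.

Lemma I_lim eps : 0 < eps -> exists M, forall z, z < M -> Rabs (I z + c) < eps.
Proof.
  intros He. assert (Hc := c_pos).
  set (B := 1 / (eps * c) + 1).
  assert (HB : 0 < 1 / (eps * c)) by (apply Rdiv_lt_0_compat; nra).
  assert (HB1 : 1 < B) by (unfold B; lra).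
  exists (- B). intros z Hz.
  set (w := - z).
  assert (Hw : B < w) by (unfold w; lra).
  assert (Iz : I z = - I w) by (unfold w; rewrite I_odd; symmetry; apply Ropp_involutive).
  rewrite Iz.
  assert (Iw0 := I_nonneg w ltac:(lra)).
  assert (Isq := I_sq w). rewrite <- c_sq in Isq.
  destruct (A_bound w) as [A0 A1].
  assert (Ex : exp (- w ^ 2) * (1 + w ^ 2) <= 1).
  { rewrite exp_Ropp. assert (X := exp_ineq1_le (w ^ 2)). assert (Y := exp_pos (w ^ 2)).
    apply (Rmult_le_reg_l (exp (w ^ 2))); auto. rewrite <- Rmult_assoc, Rinv_r; lra. }
  assert (D1 : 0 <= c - I w) by nra.
  assert (D2 : (c - I w) * c <= A w) by nra.
  assert (HBd : B = 1 / (eps * c) + 1) by reflexivity.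
  assert (Ww : w <= w ^ 2) by (simpl; nra).
  assert (W : 1 / (eps * c) < 1 + w ^ 2) by lra.
  assert (W2 : 1 < eps * c * (1 + w ^ 2)).
  { apply (Rmult_lt_compat_l (eps * c)) in W; [|nra].
    replace (eps * c * (1 / (eps * c))) with 1 in W by (field; nra). lra. }
  rewrite Rabs_right by lra.
  assert (Pw := pow2_ge_0 w).
  assert (A w * (1 + w ^ 2) <= 1) by nra.
  assert (K1 : (c - I w) * (c * (1 + w ^ 2)) < eps * (c * (1 + w ^ 2))).
  { assert ((c - I w) * c * (1 + w ^ 2) <= A w * (1 + w ^ 2)) by (apply Rmult_le_compat_r; lra). nra. }
  apply Rmult_lt_reg_r in K1; [lra | nra].
Qed.

Definition k := sqrt 2.
Lemma k_pos : 0 < k.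
Proof. apply sqrt_lt_R0; lra. Qed.
Lemma k_sq : k * k = 2.
Proof. apply sqrt_sqrt; lra. Qed.

Definition K y := k * I (y / k).

Lemma K_der y : is_derive K y (exp (- y ^ 2 / 2)).
Proof.
  assert (Hk := k_pos). assert (Hk2 := k_sq).
  unfold K.
  evar (d : R). replace (exp (- y ^ 2 / 2)) with d.
  - apply (is_derive_scal (fun y => I (y / k))).
    apply (is_derive_comp I (fun y => y / k)). apply I_der.
    apply (is_derive_ext (fun y => scal (/ k) y)). intros; unfold scal; simpl; unfold mult; simpl; unfold Rdiv; ring.
    apply (is_derive_scal (fun y => y)). apply is_derive_id.
  - unfold d, g, scal; simpl; unfold mult; simpl. unfold one; simpl.
    replace (- (y / k * (y / k * 1))) with (- (y * (y * 1)) / 2).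
    field. lra.
    rewrite <- Hk2. field. lra.
Qed.

Lemma ncdf_val d :
  is_RInt_gen (fun t => exp (- t ^ 2 / 2)) (Rbar_locally m_infty) (at_point d) (K d + k * c).
Proof.
  assert (Hk := k_pos).
  assert (DK : forall y, Derive K y = exp (- y ^ 2 / 2)) by (intros; apply is_derive_unique, K_der).
  apply (is_RInt_gen_ext (Derive K)).
  { apply filter_forall. intros; apply DK. }
  replace (K d + k * c) with (K d - (- (k * c))) by ring.
  apply is_RInt_gen_Derive.
  - apply filter_forall. intros. eexists; apply K_der.
  - apply filter_forall. intros. apply (continuous_ext (fun y => exp (- y ^ 2 / 2))).
    intros; symmetry; apply DK.
    apply (ex_derive_continuous (V:=R_NormedModule)); auto_derive; auto.
  - apply filterlim_locally. intros eps.
    destruct (I_lim (eps / k)) as [M HM].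
    { apply Rdiv_lt_0_compat; [apply cond_pos | exact Hk]. }
    exists (M * k). intros y Hy.
    change (Rabs (K y - - (k * c)) < eps).
    unfold K. replace (k * I (y / k) - - (k * c)) with (k * (I (y / k) + c)) by ring.
    rewrite Rabs_mult, (Rabs_right k) by lra.
    assert (HH := HM (y / k) ltac:(apply (Rmult_lt_reg_r k); [lra| unfold Rdiv; rewrite Rmult_assoc, Rinv_l; lra])).
    apply (Rmult_lt_compat_l k) in HH; [|lra].
    replace (k * (eps / k)) with (pos eps) in HH by (field; lra). exact HH.
  - intros P HP. apply (locally_singleton _ _ HP).
Qed.

Lemma Ncdf_eq d : / sqrt (2 * PI) *
  RInt_gen (fun t => exp (- t ^ 2 / 2)) (Rbar_locally m_infty) (at_point d) = / sqrt (2 * PI) * (K d + k * c).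
Proof. f_equal. apply is_RInt_gen_unique, ncdf_val. Qed.

Lemma sum_one d : / sqrt (2 * PI) * (K d + k * c) + / sqrt (2 * PI) * (K (- d) + k * c) = 1.
Proof.
  assert (KO : K (- d) = - K d).
  { unfold K. replace (- d / k) with (- (d / k)) by (unfold Rdiv; ring). rewrite I_odd. ring. }
  rewrite KO.
  assert (Hs : sqrt (2 * PI) = 2 * (k * c)).
  { unfold k, c. rewrite sqrt_mult by (generalize PI_RGT_0; lra). field. }
  assert (Hp : 0 < k * c) by (apply Rmult_lt_0_compat; [apply k_pos | apply c_pos]).
  rewrite Hs. field. generalize c_pos k_pos; split; lra.
Qed.

Lemma Ncdf_sym d : Ncdf (- d) = 1 - Ncdf d.
Proof.
  unfold Ncdf. rewrite !Ncdf_eq. generalize (sum_one d). lra.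
Qed.

Theorem proposition2 (S X T : R) :
  0 < S -> 0 < X -> 0 < T -> X <> S ->
  let alpha := sqrt (2 * Rabs (ln (S / X))) in
  forall sigma : R, 0 < sigma ->
    (X > S -> bs_call S X T sigma = S * chi alpha (sigma * sqrt T / alpha)) /\
    (X < S -> bs_call S X T sigma = S - X + X * chi alpha (sigma * sqrt T / alpha)).
Proof.
  intros HS HX HT HXS alpha sigma Hsig.
  assert (HsT : 0 < sqrt T) by (apply sqrt_lt_R0; lra).
  assert (Hs : 0 < sigma * sqrt T) by (apply Rmult_lt_0_compat; lra).
  unfold bs_call, bs_d1, bs_d2, chi.
  set (s := sigma * sqrt T) in *.
  set (L := ln (S / X)) in *.
  assert (HSX : 0 < S / X) by (apply Rdiv_lt_0_compat; lra).
  assert (Ea : alpha * alpha = 2 * Rabs L).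
  { unfold alpha. apply sqrt_sqrt. generalize (Rabs_pos L); lra. }
  assert (Ha2 : alpha ^ 2 = alpha * alpha) by ring.
  assert (ExpL : exp L = S / X) by (unfold L; apply exp_ln; lra).
  split; intros Hc.
  - assert (HL : L < 0).
    { unfold L. rewrite <- ln_1. apply ln_increasing; auto.
      apply (Rmult_lt_reg_r X); auto. unfold Rdiv; rewrite Rmult_assoc, Rinv_l; lra. }
    rewrite Rabs_left in Ea by lra.
    assert (Hal : 0 < alpha).
    { unfold alpha. apply sqrt_lt_R0. rewrite Rabs_left; lra. }
    assert (E1 : alpha / 2 * (s / alpha - / (s / alpha)) = L / s + s / 2).
    { transitivity (s / 2 - (alpha * alpha) / (2 * s)). field; lra.
      rewrite Ea. field; lra. }
    assert (E2 : - (alpha / 2) * (s / alpha + / (s / alpha)) = L / s - s / 2).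
    { transitivity (- (s / 2) - (alpha * alpha) / (2 * s)). field; lra.
      rewrite Ea. field; lra. }
    assert (E3 : exp (alpha ^ 2 / 2) = X / S).
    { rewrite Ha2, Ea. replace (2 * - L / 2) with (- L) by field.
      rewrite exp_Ropp, ExpL. field. lra. }
    rewrite E1, E2, E3. field. lra.
  - assert (HL : 0 < L).
    { unfold L. rewrite <- ln_1. apply ln_increasing; try lra.
      apply (Rmult_lt_reg_r X); auto. unfold Rdiv; rewrite Rmult_assoc, Rinv_l; lra. }
    rewrite Rabs_right in Ea by lra.
    assert (Hal : 0 < alpha).
    { unfold alpha. apply sqrt_lt_R0. rewrite Rabs_right; lra. }
    assert (E1 : alpha / 2 * (s / alpha - / (s / alpha)) = - (L / s - s / 2)).
    { transitivity (s / 2 - (alpha * alpha) / (2 * s)). field; lra.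
      rewrite Ea. field; lra. }
    assert (E2 : - (alpha / 2) * (s / alpha + / (s / alpha)) = - (L / s + s / 2)).
    { transitivity (- (s / 2) - (alpha * alpha) / (2 * s)). field; lra.
      rewrite Ea. field; lra. }
    assert (E3 : exp (alpha ^ 2 / 2) = S / X).
    { rewrite Ha2, Ea. replace (2 * L / 2) with L by field. exact ExpL. }
    rewrite E1, E2, E3, !Ncdf_sym. field. lra.
Qed.
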